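(* Under Assumption 1, for every $t\in\{0,1,\dots,T\}$, every risk-aversion vector $\beta$, and every $r\in\mathcal R$, the map $p\mapsto V_{t,T}(r,p\,|\,\beta)$ is Lipschitz continuous on $\mathbb R$.
   Context: Model (dynamic EV charging). Fix a horizon $T\in\{1,2,\dots\}$, a battery capacity $R_{\max}>0$, a maximal charge per period $x_{\max}>0$, an initial charge $R_0\in[0,R_{\max}]$, an access fee $c_f\in\mathbb R$, a reference price $p_{\mathrm{ref}}>0$, a constant $\gamma_h\ge 0$, a deterministic seasonality function $g:\mathbb R\to\mathbb R$, and price parameters $\kappa_Y>0$, $\mu_Y\in\mathbb R$, $\sigma_Y>0$, $\lambda_J\in(0,1)$, $\mu_J\in\mathbb R$, $\sigma_J>0$. Spot prices are $P_t=g(t)+Y_t$ with $Y_{t+1}=Y_te^{-\kappa_Y}+\mu_Y(1-e^{-\kappa_Y})+\xi_{t+1}+X_{t+1}J_{t+1}$, where $(\xi_t)$ are i.i.d. $\mathcal N\big(0,\sigma_Y^2(1-e^{-2\kappa_Y})/(2\kappa_Y)\big)$, $(X_t)$ are i.i.d. Bernoulli$(\lambda_J)$, $(J_t)$ are i.i.d. $\mathcal N(\mu_J,\sigma_J^2)$, all mutually independent. Define $\psi_{t+1}=g(t+1)-g(t)e^{-\kappa_Y}+\mu_Y(1-e^{-\kappa_Y})+\xi_{t+1}+X_{t+1}J_{t+1}$ and $\psi_{t+1,Y}=\psi_{t+1}-g(t+1)$ (so given $P_t=p$, $P_{t+1}$ has the law of $pe^{-\kappa_Y}+\psi_{t+1}$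 and $Y_{t+1}$ that of $pe^{-\kappa_Y}+\psi_{t+1,Y}$). Let $\mathcal R=[0,R_{\max}]$, $\mathcal X(r)=[0,\min\{R_{\max}-r,x_{\max}\}]$, and shortage $h(r)=\min\{R_0+Tx_{\max},R_{\max}\}-r$. Let $\gamma_Y:\mathbb R\to(0,\infty)$ be a compensation function. Assumption 1: $\gamma_Y$ is positive, strictly increasing, and $L_{\gamma_Y}$-Lipschitz continuous with $L_{\gamma_Y}\le p_{\mathrm{ref}}^{-1}e^{2\kappa_Y}$. Risk measures. For $\alpha\in(0,1)$: $\mathrm{VaR}_\alpha(X)=\inf\{u:\mathbf P(X\le u)>\alpha\}$, $\mathrm{CVaR}_\alpha(X)=\inf_u\{u+(1-\alpha)^{-1}\mathbf E[(X-u)^+]\}$. For $\beta_t=(\lambda_t,\alpha_t)\in[0,1]\times(0,1)$, $\rho_{\beta_t}(X)=(1-\lambda_t)\mathbf E[X]+\lambda_t\mathrm{CVaR}_{\alpha_t}(X)$. A risk-aversion vector is $\beta=(\lambda_0,\alpha_0,\dots,\lambda_T,\alpha_T)$. Value functions. For $r\in\mathcal R$, $p\in\mathbb R$: $V_{T,T}(r,p\,|\,\beta)=\rho_{\beta_T}\big[\big(1+\gamma_h h(r)+\gamma_Y(pe^{-\kappa_Y}+\psi_{T+1,Y})\big)h(r)p_{\mathrm{ref}}\big]$, and for $t=T-1,\dots,0$: $\tilde V_{t,T}(r,p\,|\,\beta)=\rho_{\beta_t}\big[V_{t+1,T}(r,pe^{-\kappa_Y}+\psi_{t+1}\,|\,\beta)\big]$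 (post-decision value function) and $V_{t,T}(r,p\,|\,\beta)=\min_{x\in\mathcal X(r)}\{xp-c_f+\tilde V_{t,T}(r+x,p\,|\,\beta)\}$. *)

(* Defs.v *)
From Stdlib Require Import Reals Lra ClassicalEpsilon.
Open Scope R_scope.

Definition choose (P : R -> Prop) (d : R) : R :=
  match excluded_middle_informative (exists x, P x) with
  | left H => proj1_sig (constructive_indefinite_description _ H)
  | right _ => d
  end.

Definition is_glb (E : R -> Prop) (m : R) : Prop :=
  (forall x, E x -> m <= x) /\ (forall b, (forall x, E x -> b <= x) -> b <= m).

(* infimum (the glb; all infima used below are finite) *)
Definition Rinf (E : R -> Prop) : R := choose (is_glb E) 0.

Definition Rint (f : R -> R) (a b : R) : R :=
  choose (fun v => exists pr : Riemann_integrable f a b, RiemannInt pr = v) 0.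

Definition Iline (f : R -> R) : R :=
  choose (fun l => Un_cv (fun n => Rint f (- INR n) (INR n)) l) 0.

Definition gauss (m v x : R) : R :=
  exp (- (x - m) ^ 2 / (2 * v)) / sqrt (2 * PI * v).

Record model := Model {
  T : nat; Rcap : R; xmax : R; Rinit : R; cf : R; pref : R; gh : R;
  g : R -> R; kY : R; muY : R; sY : R; lJ : R; muJ : R; sJ : R;
  gY : R -> R }.

Section Model.
Variable M : model.

(* variance of xi_t *)
Definition var_xi : R := sY M ^ 2 * (1 - exp (- 2 * kY M)) / (2 * kY M).

(* E[ h(xi + X J) ], xi ~ N(0,var_xi), X ~ Bernoulli(lJ), J ~ N(muJ, sJ^2),
   all independent *)
Definition EZ (h : R -> R) : R :=
  (1 - lJ M) * Iline (fun x => h x * gauss 0 var_xi x)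
  + lJ M * Iline (fun x => gauss 0 var_xi x *
                 Iline (fun j => h (x + j) * gauss (muJ M) (sJ M ^ 2) j)).

Definition CVaR (a : R) (h : R -> R) : R :=
  Rinf (fun w => exists u, w = u + / (1 - a) * EZ (fun z => Rmax (h z - u) 0)).

Definition rho (lam a : R) (h : R -> R) : R :=
  (1 - lam) * EZ h + lam * CVaR a h.

(* deterministic part of psi_{t+1}:  psi_{t+1} = adet t + xi_{t+1} + X_{t+1} J_{t+1} *)
Definition adet (t : nat) : R :=
  g M (INR t + 1) - g M (INR t) * exp (- kY M) + muY M * (1 - exp (- kY M)).

Definition shortage (r : R) : R := Rmin (Rinit M + INR (T M) * xmax M) (Rcap M) - r.

(* Value functions; Vn lam alp n = V_{T-n,T}( . , . | beta) where
   beta = (lam 0, alp 0, ..., lam T, alp T). *)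
Fixpoint Vn (lam alp : nat -> R) (n : nat) : R -> R -> R :=
  match n with
  | O => fun r p =>
      rho (lam (T M)) (alp (T M)) (fun z =>
        (1 + gh M * shortage r
           + gY M (p * exp (- kY M) + (adet (T M) - g M (INR (T M) + 1)) + z))
        * shortage r * pref M)
  | S k => fun r p =>
      let t := (T M - S k)%nat in
      Rinf (fun w => exists x, 0 <= x <= Rmin (Rcap M - r) (xmax M) /\
        w = x * p - cf M
            + rho (lam t) (alp t)
                (fun z => Vn lam alp k (r + x) (p * exp (- kY M) + adet t + z)))
  end.

Definition V (lam alp : nat -> R) (t : nat) (r p : R) : R :=
  Vn lam alp (T M - t) r p.

End Model.

(* Main.v *)
Require Import Defs.
From Stdlib Require Import Reals Lra ClassicalEpsilon Classical FunctionalExtensionality.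
From Coquelicot Require Import Coquelicot.
Open Scope R_scope.

Definition Lip (f : R -> R) (L : R) := forall x y, Rabs (f x - f y) <= L * Rabs (x - y).

Lemma Lip_cont f L : Lip f L -> forall x, continuous f x.
Proof.
  intros H x. apply continuity_pt_filterlim.
  intros eps Heps. exists (eps / (Rabs L + 1)). split.
  - apply Rdiv_lt_0_compat; [lra| pose proof (Rabs_pos L); lra].
  - intros y [_ Hy]. simpl in *. unfold R_dist in *.
    pose proof (H y x). pose proof (Rabs_pos L). pose proof (Rle_abs L).
    assert (Rabs (y - x) * (Rabs L + 1) < eps).
    { apply (Rmult_lt_compat_r (Rabs L + 1)) in Hy; [|lra].
      replace (eps / (Rabs L + 1) * (Rabs L + 1)) with eps in Hy by (field; lra). lra. }
    pose proof (Rabs_pos (y - x)). nra.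
Qed.

Lemma Rint_RInt f a b : ex_RInt f a b -> Rint f a b = RInt f a b.
Proof.
  intros Hex. unfold Rint, choose.
  destruct excluded_middle_informative as [H|H].
  - destruct constructive_indefinite_description as [v [pr Hv]]; simpl.
    rewrite <- Hv. symmetry. apply RInt_Reals.
  - exfalso. apply H. exists (RiemannInt (ex_RInt_Reals_0 _ _ _ Hex)).
    eexists; reflexivity.
Qed.

Lemma Iline_cv f u l : (forall n, Rint f (- INR n) (INR n) = u n) -> Un_cv u l -> Iline f = l.
Proof.
  intros Hu Hl. unfold Iline, choose.
  replace (fun n => Rint f (- INR n) (INR n)) with u
    by (apply functional_extensionality; intros; auto).
  destruct excluded_middle_informative as [H|H].
  - destruct constructive_indefinite_description as [v Hv]; simpl.
    eapply UL_sequence; eauto.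
  - exfalso; apply H; eauto.
Qed.

Lemma Iline_ncv f u : (forall n, Rint f (- INR n) (INR n) = u n) -> (forall l, ~ Un_cv u l) -> Iline f = 0.
Proof.
  intros Hu Hl. unfold Iline, choose.
  replace (fun n => Rint f (- INR n) (INR n)) with u
    by (apply functional_extensionality; intros; auto).
  destruct excluded_middle_informative as [H|H]; auto.
  destruct H as [l Hl']. exfalso; apply (Hl l Hl').
Qed.

Lemma gauss_pos m v x : 0 < v -> 0 < gauss m v x.
Proof.
  intros Hv. unfold gauss. apply Rdiv_lt_0_compat. apply exp_pos.
  apply sqrt_lt_R0. pose proof PI_RGT_0. nra.
Qed.

Lemma gauss_cont m v x : 0 < v -> continuous (gauss m v) x.
Proof.
  intros Hv. apply (ex_derive_continuous (gauss m v)). unfold gauss. auto_derive. all: auto.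
Qed.

Definition GB v := PI * sqrt (2 * v) / sqrt (2 * PI * v).

Lemma GB_pos v : 0 < v -> 0 <= GB v.
Proof.
  intros Hv. unfold GB. pose proof PI_RGT_0. apply Rmult_le_pos.
  apply Rmult_le_pos; [lra| apply sqrt_pos].
  left; apply Rinv_0_lt_compat, sqrt_lt_R0; nra.
Qed.

Lemma gauss_int_bound m v a b : 0 < v -> a <= b -> RInt (gauss m v) a b <= GB v.
Proof.
  intros Hv Hab. pose proof PI_RGT_0.
  set (s := sqrt (2 * v)). set (k := / sqrt (2 * PI * v)).
  assert (Hs : 0 < s) by (apply sqrt_lt_R0; lra).
  assert (Hs2 : s * s = 2 * v) by (apply sqrt_sqrt; lra).
  assert (Hk : 0 < k) by (apply Rinv_0_lt_compat, sqrt_lt_R0; nra).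
  set (phi := fun x => k / (1 + ((x - m) / s) ^ 2)).
  set (Phi := fun x => k * s * atan ((x - m) / s)).
  assert (HI : is_RInt phi a b (minus (Phi b) (Phi a))).
  { apply (is_RInt_derive Phi phi).
    - intros x _. unfold Phi, phi.
      replace (k / (1 + ((x - m) / s) ^ 2)) with (k * s * (scal (/ s) (/ (1 + ((x - m) / s) ^ 2)))).
      2:{ unfold scal; simpl; unfold mult; simpl. pose proof (pow2_ge_0 ((x - m) / s)). field. split; [lra|]. intro Hc. assert (0 < s*s) by (apply Rmult_lt_0_compat; lra). pose proof (Rle_0_sqr (x-m)). unfold Rsqr in *. lra. }
      apply (is_derive_scal (fun x => atan ((x-m)/s))). apply (is_derive_comp atan (fun x => (x-m)/s)).
      + apply is_derive_Reals, derivable_pt_lim_atan.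
      + auto_derive; auto. field; lra.
    - intros x _. apply (ex_derive_continuous phi). unfold phi. auto_derive.
      pose proof (pow2_ge_0 ((x - m) / s)). rewrite Rmult_1_r. pose proof (Rle_0_sqr ((x + - m) * / s)). unfold Rsqr in *. intro; lra. }
  assert (Hle : RInt (gauss m v) a b <= RInt phi a b).
  { apply RInt_le; auto.
    - apply (ex_RInt_continuous (gauss m v)); intros; apply gauss_cont; auto.
    - eexists; eauto.
    - intros x _. unfold gauss, phi.
      set (y := (x - m) ^ 2 / (2 * v)).
      assert (Hy : 0 <= y) by (unfold y; apply Rdiv_le_0_compat; [apply pow2_ge_0|lra]).
      replace (((x - m) / s) ^ 2) with y by (unfold y; rewrite <- Hs2; field; lra).
      replace (- (x - m) ^ 2 / (2 * v)) with (- y) by (unfold y; field; lra).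
      rewrite exp_Ropp. unfold Rdiv. rewrite Rmult_comm. fold k.
      apply Rmult_le_compat_l; [lra|]. apply Rinv_le_contravar; [lra|].
      apply exp_ineq1_le. }
  rewrite (is_RInt_unique _ _ _ _ HI) in Hle.
  unfold minus, plus, opp in Hle; simpl in Hle. unfold Phi in Hle.
  pose proof (atan_bound ((b - m) / s)). pose proof (atan_bound ((a - m) / s)).
  assert (k * s * (atan ((b - m) / s) - atan ((a - m) / s)) <= k * s * PI).
  { apply Rmult_le_compat_l; [nra|lra]. }
  unfold GB. fold s. unfold Rdiv. fold k. nra.
Qed.

Lemma Rabs_le_2 x y : Rabs x <= y -> - y <= x <= y.
Proof. unfold Rabs; destruct Rcase_abs; lra. Qed.

Lemma Un_cv_ext u w l : (forall n, u n = w n) -> Un_cv u l -> Un_cv w l.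
Proof. intros H Hu eps He. destruct (Hu eps He) as [N HN]. exists N. intros n Hn. rewrite <- H. auto. Qed.

Lemma Un_cv_const d : Un_cv (fun _ => d) d.
Proof. intros eps He. exists 0%nat. intros. unfold R_dist. rewrite Rminus_diag, Rabs_R0. lra. Qed.

Lemma cv_bound u l K : Un_cv u l -> (forall n, Rabs (u n) <= K) -> Rabs l <= K.
Proof.
  intros Hu HK. destruct (Rle_or_lt (Rabs l) K) as [|Hlt]; auto.
  destruct (Hu (Rabs l - K)) as [N HN]; [lra|].
  specialize (HN N (le_n N)). unfold R_dist in HN. specialize (HK N).
  pose proof (Rabs_triang_inv l (u N)). rewrite Rabs_minus_sym in HN. lra.
Qed.

Lemma cont_plus (f g : R -> R) x: continuous f x -> continuous g x -> continuous (fun y => f y + g y) x.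
Proof. intros. exact (@continuous_plus R_UniformSpace R_AbsRing R_NormedModule f g x H H0). Qed.
Lemma cont_minus (f g : R -> R) x: continuous f x -> continuous g x -> continuous (fun y => f y - g y) x.
Proof. intros. exact (@continuous_minus R_UniformSpace R_AbsRing R_NormedModule f g x H H0). Qed.
Lemma cont_mult (f g : R -> R) x: continuous f x -> continuous g x -> continuous (fun y => f y * g y) x.
Proof. intros. exact (@continuous_scal R_UniformSpace R_AbsRing R_NormedModule f g x H H0). Qed.
Lemma cont_const (c x : R) : continuous (fun _ : R => c) x.
Proof. exact (@continuous_const R_UniformSpace R_UniformSpace c x). Qed.
Lemma RInt_plusR (f g : R -> R) a b: ex_RInt f a b -> ex_RInt g a b -> RInt (fun x => f x + g x) a b = RInt f a b + RInt g a b.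
Proof. intros. exact (@RInt_plus R_CompleteNormedModule f g a b H H0). Qed.
Lemma RInt_minusR (f g : R -> R) a b: ex_RInt f a b -> ex_RInt g a b -> RInt (fun x => f x - g x) a b = RInt f a b - RInt g a b.
Proof. intros. exact (@RInt_minus R_CompleteNormedModule f g a b H H0). Qed.
Lemma RInt_scalR (f : R -> R) a b c: ex_RInt f a b -> RInt (fun x => c * f x) a b = c * RInt f a b.
Proof. intros. exact (@RInt_scal R_CompleteNormedModule f a b c H). Qed.

Lemma ex_RInt_c (f : R -> R) a b : (forall x, continuous f x) -> ex_RInt f a b.
Proof. intros H. apply (ex_RInt_continuous f). intros; auto. Qed.

Lemma growing_RInt phi : (forall x, continuous phi x) -> (forall x, 0 <= phi x) ->
  Un_growing (fun n => RInt phi (- INR n) (INR n)).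
Proof.
  intros Hc Hp n. unfold Un_growing. rewrite S_INR.
  assert (E1 : RInt phi (- (INR n + 1)) (- INR n) + RInt phi (- INR n) (INR n + 1) = RInt phi (- (INR n + 1)) (INR n + 1))
    by exact (RInt_Chasles phi _ _ _ (ex_RInt_c _ _ _ Hc) (ex_RInt_c _ _ _ Hc)).
  assert (E2 : RInt phi (- INR n) (INR n) + RInt phi (INR n) (INR n + 1) = RInt phi (- INR n) (INR n + 1))
    by exact (RInt_Chasles phi _ _ _ (ex_RInt_c _ _ _ Hc) (ex_RInt_c _ _ _ Hc)).
  assert (0 <= RInt phi (- (INR n + 1)) (- INR n)) by (apply RInt_ge_0; [lra|apply ex_RInt_c; auto|intros; auto]).
  assert (0 <= RInt phi (INR n) (INR n + 1)) by (apply RInt_ge_0; [lra|apply ex_RInt_c; auto|intros; auto]).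
  lra.
Qed.

Lemma Iline_diff (f1 f2 : R -> R) m v d : 0 < v -> 0 <= d ->
  (forall x, continuous f1 x) -> (forall x, continuous f2 x) ->
  (forall x, Rabs (f1 x - f2 x) <= d * gauss m v x) ->
  Rabs (Iline f1 - Iline f2) <= d * GB v.
Proof.
  intros Hv Hd H1 H2 Hb.
  set (g := gauss m v).
  assert (Hg : forall x, continuous g x) by (intros; apply gauss_cont; auto).
  assert (Hgp : forall x, 0 <= g x) by (intros; left; apply gauss_pos; auto).
  set (h := fun x => f1 x - f2 x + d * g x).
  assert (Hh : forall x, continuous h x).
  { intros x. apply cont_plus. apply cont_minus; auto. apply cont_mult; auto. apply cont_const. }
  assert (Hhp : forall x, 0 <= h x).
  { intros x. unfold h. specialize (Hb x). fold g in Hb.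
    apply Rabs_le_2 in Hb. lra. }
  assert (Hhb : forall x, h x <= 2 * d * g x).
  { intros x. unfold h. specialize (Hb x). fold g in Hb. apply Rabs_le_2 in Hb. lra. }
  set (A := fun n => RInt f1 (- INR n) (INR n)).
  set (B := fun n => RInt f2 (- INR n) (INR n)).
  set (G := fun n => RInt g (- INR n) (INR n)).
  set (E := fun n => RInt h (- INR n) (INR n)).
  assert (Hlin : forall n, A n - B n = E n - d * G n).
  { intros n. unfold A, B, E, G, h.
    assert (X1 : RInt (fun x => f1 x - f2 x + d * g x) (- INR n) (INR n) =
                 RInt (fun x => f1 x - f2 x) (- INR n) (INR n) + RInt (fun x => d * g x) (- INR n) (INR n)).
    { apply (RInt_plusR (fun x => f1 x - f2 x) (fun x => d * g x)); apply ex_RInt_c; intros.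
      apply cont_minus; auto. apply cont_mult; auto; apply cont_const. }
    assert (X2 : RInt (fun x => f1 x - f2 x) (- INR n) (INR n) = RInt f1 (- INR n) (INR n) - RInt f2 (- INR n) (INR n))
      by (apply RInt_minusR; apply ex_RInt_c; auto).
    assert (X3 : RInt (fun x => d * g x) (- INR n) (INR n) = d * RInt g (- INR n) (INR n))
      by (apply RInt_scalR; apply ex_RInt_c; auto).
    lra. }
  assert (HG : forall n, 0 <= G n <= GB v).
  { intros n. pose proof (pos_INR n). split.
    - apply RInt_ge_0; [lra|apply ex_RInt_c; auto|intros; auto].
    - apply gauss_int_bound; auto; lra. }
  assert (HE : forall n, 0 <= E n <= 2 * d * G n).
  { intros n. pose proof (pos_INR n). split.
    - apply RInt_ge_0; [lra|apply ex_RInt_c; auto|intros; auto].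
    - assert (X3 : RInt (fun x => (2 * d) * g x) (- INR n) (INR n) = (2 * d) * RInt g (- INR n) (INR n))
        by (apply RInt_scalR; apply ex_RInt_c; auto).
      unfold E, G. rewrite <- X3. apply RInt_le; [lra|apply ex_RInt_c; auto| |intros; auto].
      apply ex_RInt_c; intros; apply cont_mult; auto; apply cont_const. }
  assert (Hbd : forall n, Rabs (A n - B n) <= d * GB v).
  { intros n. rewrite Hlin. specialize (HG n). specialize (HE n).
    apply Rabs_le. split; nra. }
  destruct (growing_cv G) as [lg Hlg].
  { apply growing_RInt; auto. }
  { exists (GB v). intros x [i ->]. apply HG. }
  destruct (growing_cv E) as [le Hle].
  { apply growing_RInt; auto. }
  { exists (2 * d * GB v). intros x [i ->]. specialize (HG i). specialize (HE i). nra. }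
  assert (HC : Un_cv (fun n => A n - B n) (le - d * lg)).
  { apply (Un_cv_ext (fun n => E n - (fun _ => d) n * G n)).
    - intros; rewrite Hlin; auto.
    - apply CV_minus; auto. apply CV_mult; auto. apply Un_cv_const. }
  assert (Hlc : Rabs (le - d * lg) <= d * GB v) by (eapply cv_bound; eauto).
  assert (EA : forall n, Rint f1 (- INR n) (INR n) = A n) by (intros; apply Rint_RInt, ex_RInt_c; auto).
  assert (EB : forall n, Rint f2 (- INR n) (INR n) = B n) by (intros; apply Rint_RInt, ex_RInt_c; auto).
  destruct (classic (exists la, Un_cv A la)) as [[la Hla]|Hna].
  - rewrite (Iline_cv f1 A la EA Hla).
    assert (Un_cv B (la - (le - d * lg))).
    { apply (Un_cv_ext (fun n => A n - (A n - B n))). intros; ring.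
      apply CV_minus; auto. }
    rewrite (Iline_cv f2 B _ EB H). replace (la - (la - (le - d * lg))) with (le - d * lg) by ring. auto.
  - rewrite (Iline_ncv f1 A EA).
    2:{ intros l Hl. apply Hna. eauto. }
    rewrite (Iline_ncv f2 B EB).
    2:{ intros l Hl. apply Hna. exists (l + (le - d * lg)).
        apply (Un_cv_ext (fun n => B n + (A n - B n))). intros; ring. apply CV_plus; auto. }
    rewrite Rminus_diag, Rabs_R0. pose proof (GB_pos v Hv). nra.
Qed.

Lemma Rinf_spec E : (exists m, is_glb E m) -> is_glb E (Rinf E).
Proof.
  intros H. unfold Rinf, choose. destruct excluded_middle_informative as [H'|H'].
  - destruct constructive_indefinite_description; auto.
  - contradiction.
Qed.

Lemma Rinf_none E : ~ (exists m, is_glb E m) -> Rinf E = 0.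
Proof.
  intros H. unfold Rinf, choose. destruct excluded_middle_informative as [H'|H']; auto. contradiction.
Qed.

Lemma glb_ex E : (exists x, E x) -> (exists b, forall x, E x -> b <= x) -> exists m, is_glb E m.
Proof.
  intros [x0 Hx0] [b Hb]. destruct (completeness (fun y => E (- y))) as [l [Hl1 Hl2]].
  - exists (- b). intros y Hy. apply Hb in Hy. lra.
  - exists (- x0). rewrite Ropp_involutive; auto.
  - exists (- l). split.
    + intros x Hx. assert (- x <= l) by (apply Hl1; rewrite Ropp_involutive; auto). lra.
    + intros c Hc. assert (l <= - c) by (apply Hl2; intros y Hy; specialize (Hc _ Hy); lra). lra.
Qed.

Lemma Rinf_diff E1 E2 D : 0 <= D -> (exists x, E1 x) -> (exists x, E2 x) ->
  (forall w1, E1 w1 -> exists w2, E2 w2 /\ w2 <= w1 + D) ->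
  (forall w2, E2 w2 -> exists w1, E1 w1 /\ w1 <= w2 + D) ->
  Rabs (Rinf E1 - Rinf E2) <= D.
Proof.
  intros HD Hn1 Hn2 H12 H21.
  assert (Heq : (exists m, is_glb E1 m) <-> (exists m, is_glb E2 m)).
  { split; intros [m [Hm _]]; apply glb_ex; auto; exists (m - D); intros w Hw.
    - destruct (H21 w Hw) as [w1 [Hw1 Hle]]. specialize (Hm _ Hw1). lra.
    - destruct (H12 w Hw) as [w1 [Hw1 Hle]]. specialize (Hm _ Hw1). lra. }
  destruct (classic (exists m, is_glb E1 m)) as [He|He].
  - pose proof (Rinf_spec _ He) as [A1 A2]. pose proof (Rinf_spec _ (proj1 Heq He)) as [B1 B2].
    apply Rabs_le; split.
    + assert (Rinf E2 - D <= Rinf E1); [|lra]. apply A2. intros w1 Hw1.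
      destruct (H12 w1 Hw1) as [w2 [Hw2 Hle]]. specialize (B1 _ Hw2). lra.
    + assert (Rinf E1 - D <= Rinf E2); [|lra]. apply B2. intros w2 Hw2.
      destruct (H21 w2 Hw2) as [w1 [Hw1 Hle]]. specialize (A1 _ Hw1). lra.
  - rewrite !Rinf_none; auto.
    + rewrite Rminus_diag, Rabs_R0; auto.
    + intro H; apply He; apply Heq; auto.
Qed.

Lemma Lip_abs h L : Lip h L -> Lip h (Rabs L).
Proof. intros H x y. specialize (H x y). pose proof (Rle_abs L). pose proof (Rabs_pos (x - y)). nra. Qed.

Lemma Rmax_lip a b : Rabs (Rmax a 0 - Rmax b 0) <= Rabs (a - b).
Proof. unfold Rmax; destruct Rle_dec; destruct Rle_dec; unfold Rabs; repeat destruct Rcase_abs; lra. Qed.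

Lemma abs_gauss m v x : 0 < v -> Rabs (gauss m v x) = gauss m v x.
Proof. intros. apply Rabs_right. left. apply gauss_pos; auto. Qed.

Section EZs.
Variable M : model.
Hypothesis HvX : 0 < var_xi M.
Hypothesis HvJ : 0 < sJ M ^ 2.

Definition Fj (h : R -> R) (x : R) := Iline (fun j => h (x + j) * gauss (muJ M) (sJ M ^ 2) j).

Lemma Lip_shift h L c : Lip h L -> Lip (fun j => h (c + j)) L.
Proof. intros H x y. replace (x - y) with ((c + x) - (c + y)) by ring. apply H. Qed.

Lemma Fj_lip h L : 0 <= L -> Lip h L -> Lip (Fj h) (L * GB (sJ M ^ 2)).
Proof.
  intros HL H x y. unfold Fj. rewrite (Rmult_comm L), Rmult_assoc, (Rmult_comm (GB _)).
  apply (Iline_diff _ _ (muJ M)); auto.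
  - pose proof (Rabs_pos (x - y)); nra.
  - intros; apply cont_mult. apply (Lip_cont _ L (Lip_shift h L x H)). apply gauss_cont; auto.
  - intros; apply cont_mult. apply (Lip_cont _ L (Lip_shift h L y H)). apply gauss_cont; auto.
  - intros j. rewrite <- Rmult_minus_distr_r, Rabs_mult, abs_gauss; auto.
    apply Rmult_le_compat_r. left; apply gauss_pos; auto.
    replace (x - y) with ((x + j) - (y + j)) by ring. apply H.
Qed.

Lemma Fj_diff h1 h2 L1 L2 d : 0 <= L1 -> 0 <= L2 -> Lip h1 L1 -> Lip h2 L2 -> 0 <= d ->
  (forall z, Rabs (h1 z - h2 z) <= d) -> forall x, Rabs (Fj h1 x - Fj h2 x) <= d * GB (sJ M ^ 2).
Proof.
  intros HL1 HL2 H1 H2 Hd Hb x. unfold Fj. apply (Iline_diff _ _ (muJ M)); auto.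
  - intros; apply cont_mult. apply (Lip_cont _ L1 (Lip_shift h1 L1 x H1)). apply gauss_cont; auto.
  - intros; apply cont_mult. apply (Lip_cont _ L2 (Lip_shift h2 L2 x H2)). apply gauss_cont; auto.
  - intros j. rewrite <- Rmult_minus_distr_r, Rabs_mult, abs_gauss; auto.
    apply Rmult_le_compat_r. left; apply gauss_pos; auto. auto.
Qed.

Definition CZ := Rabs (1 - lJ M) * GB (var_xi M) + Rabs (lJ M) * (GB (sJ M ^ 2) * GB (var_xi M)).

Lemma CZ_pos : 0 <= CZ.
Proof.
  unfold CZ. pose proof (GB_pos _ HvX). pose proof (GB_pos _ HvJ).
  pose proof (Rabs_pos (1 - lJ M)). pose proof (Rabs_pos (lJ M)).
  apply Rplus_le_le_0_compat; apply Rmult_le_pos; auto. apply Rmult_le_pos; auto.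
Qed.

Lemma EZ_diff h1 h2 L1 L2 d : 0 <= L1 -> 0 <= L2 -> Lip h1 L1 -> Lip h2 L2 -> 0 <= d ->
  (forall z, Rabs (h1 z - h2 z) <= d) -> Rabs (EZ M h1 - EZ M h2) <= d * CZ.
Proof.
  intros HL1 HL2 H1 H2 Hd Hb. unfold EZ.
  assert (A : Rabs (Iline (fun x => h1 x * gauss 0 (var_xi M) x) - Iline (fun x => h2 x * gauss 0 (var_xi M) x))
              <= d * GB (var_xi M)).
  { apply (Iline_diff _ _ 0); auto.
    - intros; apply cont_mult. apply (Lip_cont _ _ H1). apply gauss_cont; auto.
    - intros; apply cont_mult. apply (Lip_cont _ _ H2). apply gauss_cont; auto.
    - intros x. rewrite <- Rmult_minus_distr_r, Rabs_mult, abs_gauss; auto.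
      apply Rmult_le_compat_r. left; apply gauss_pos; auto. auto. }
  pose proof (GB_pos _ HvJ) as HGJ.
  assert (B : Rabs (Iline (fun x => gauss 0 (var_xi M) x * Fj h1 x) - Iline (fun x => gauss 0 (var_xi M) x * Fj h2 x))
              <= (d * GB (sJ M ^ 2)) * GB (var_xi M)).
  { apply (Iline_diff _ _ 0); auto.
    - nra.
    - intros; apply cont_mult. apply gauss_cont; auto. apply (Lip_cont _ _ (Fj_lip h1 L1 HL1 H1)).
    - intros; apply cont_mult. apply gauss_cont; auto. apply (Lip_cont _ _ (Fj_lip h2 L2 HL2 H2)).
    - intros x. rewrite <- Rmult_minus_distr_l, Rabs_mult, abs_gauss; auto.
      rewrite Rmult_comm. apply Rmult_le_compat_r. left; apply gauss_pos; auto.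
      apply (Fj_diff h1 h2 L1 L2); auto. }
  unfold Fj in B.
  set (I1 := Iline (fun x => h1 x * gauss 0 (var_xi M) x)) in *.
  set (I2 := Iline (fun x => h2 x * gauss 0 (var_xi M) x)) in *.
  set (J1 := Iline (fun x => gauss 0 (var_xi M) x * Iline (fun j => h1 (x + j) * gauss (muJ M) (sJ M ^ 2) j))) in *.
  set (J2 := Iline (fun x => gauss 0 (var_xi M) x * Iline (fun j => h2 (x + j) * gauss (muJ M) (sJ M ^ 2) j))) in *.
  replace ((1 - lJ M) * I1 + lJ M * J1 - ((1 - lJ M) * I2 + lJ M * J2))
    with ((1 - lJ M) * (I1 - I2) + lJ M * (J1 - J2)) by ring.
  eapply Rle_trans; [apply Rabs_triang|]. rewrite !Rabs_mult.
  unfold CZ.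
  pose proof (Rabs_pos (1 - lJ M)). pose proof (Rabs_pos (lJ M)).
  apply Rmult_le_compat_l with (r := Rabs (1 - lJ M)) in A; auto.
  apply Rmult_le_compat_l with (r := Rabs (lJ M)) in B; auto.
  nra.
Qed.

Definition Kr (lam a : R) := Rabs (1 - lam) + Rabs lam * Rabs (/ (1 - a)).

Lemma Kr_pos lam a : 0 <= Kr lam a.
Proof. unfold Kr. pose proof (Rabs_pos (1 - lam)). pose proof (Rabs_pos lam). pose proof (Rabs_pos (/ (1 - a))). nra. Qed.

Lemma rho_diff lam a h1 h2 L1 L2 d : 0 <= L1 -> 0 <= L2 -> Lip h1 L1 -> Lip h2 L2 -> 0 <= d ->
  (forall z, Rabs (h1 z - h2 z) <= d) -> Rabs (rho M lam a h1 - rho M lam a h2) <= Kr lam a * (d * CZ).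
Proof.
  intros HL1 HL2 H1 H2 Hd Hb. unfold rho.
  pose proof CZ_pos. pose proof (Rabs_pos (/ (1 - a))).
  assert (HE := EZ_diff h1 h2 L1 L2 d HL1 HL2 H1 H2 Hd Hb).
  assert (Hm : forall u, Rabs (EZ M (fun z => Rmax (h1 z - u) 0) - EZ M (fun z => Rmax (h2 z - u) 0)) <= d * CZ).
  { intros u. apply (EZ_diff _ _ L1 L2); auto.
    - intros x y. eapply Rle_trans; [apply Rmax_lip|]. replace (h1 x - u - (h1 y - u)) with (h1 x - h1 y) by ring. apply H1.
    - intros x y. eapply Rle_trans; [apply Rmax_lip|]. replace (h2 x - u - (h2 y - u)) with (h2 x - h2 y) by ring. apply H2.
    - intros z. eapply Rle_trans; [apply Rmax_lip|]. replace (h1 z - u - (h2 z - u)) with (h1 z - h2 z) by ring. apply Hb. }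
  assert (HC : Rabs (CVaR M a h1 - CVaR M a h2) <= Rabs (/ (1 - a)) * (d * CZ)).
  { unfold CVaR. apply Rinf_diff.
    - apply Rmult_le_pos; auto. apply Rmult_le_pos; auto.
    - eexists; exists 0; reflexivity.
    - eexists; exists 0; reflexivity.
    - intros w1 [u ->]. eexists; split; [exists u; reflexivity|].
      specialize (Hm u). rewrite Rabs_minus_sym in Hm.
      pose proof (Rle_abs (/ (1 - a) * (EZ M (fun z => Rmax (h2 z - u) 0) - EZ M (fun z => Rmax (h1 z - u) 0)))).
      rewrite Rabs_mult in H3.
      apply Rmult_le_compat_l with (r := Rabs (/ (1 - a))) in Hm; auto. nra.
    - intros w1 [u ->]. eexists; split; [exists u; reflexivity|].
      specialize (Hm u).
      pose proof (Rle_abs (/ (1 - a) * (EZ M (fun z => Rmax (h1 z - u) 0) - EZ M (fun z => Rmax (h2 z - u) 0)))).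
      rewrite Rabs_mult in H3.
      apply Rmult_le_compat_l with (r := Rabs (/ (1 - a))) in Hm; auto. nra. }
  replace ((1 - lam) * EZ M h1 + lam * CVaR M a h1 - ((1 - lam) * EZ M h2 + lam * CVaR M a h2))
    with ((1 - lam) * (EZ M h1 - EZ M h2) + lam * (CVaR M a h1 - CVaR M a h2)) by ring.
  eapply Rle_trans; [apply Rabs_triang|]. rewrite !Rabs_mult. unfold Kr.
  pose proof (Rabs_pos (1 - lam)). pose proof (Rabs_pos lam).
  apply Rmult_le_compat_l with (r := Rabs (1 - lam)) in HE; auto.
  apply Rmult_le_compat_l with (r := Rabs lam) in HC; auto.
  nra.
Qed.

End EZs.

Lemma var_pos M : 0 < kY M -> 0 < sY M -> 0 < var_xi M.
Proof.
  intros Hk Hs. unfold var_xi. apply Rdiv_lt_0_compat; [|lra].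
  apply Rmult_lt_0_compat. apply pow_lt; lra.
  assert (exp (-2 * kY M) < 1). { rewrite <- exp_0. apply exp_increasing. lra. } lra.
Qed.

Lemma mult_abs_bound a b c : Rabs a <= b -> Rabs (a * c) <= b * Rabs c.
Proof. intros. rewrite Rabs_mult. apply Rmult_le_compat_r; auto. apply Rabs_pos. Qed.

Lemma Vn_lip M lam alp : 0 < var_xi M -> 0 < sJ M ^ 2 -> 0 < xmax M ->
  (exists L, forall y1 y2, Rabs (gY M y1 - gY M y2) <= L * Rabs (y1 - y2)) ->
  forall k, exists L, 0 <= L /\ forall r, 0 <= r <= Rcap M -> Lip (Vn M lam alp k r) L.
Proof.
  intros HvX HvJ Hxm [Lg0 HLg0] k.
  assert (HLg : Lip (gY M) (Rabs Lg0)) by (apply Lip_abs; exact HLg0).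
  set (Lg := Rabs Lg0) in *. assert (HLgp : 0 <= Lg) by apply Rabs_pos.
  set (e := exp (- kY M)). assert (He : 0 < e) by apply exp_pos.
  pose proof (CZ_pos M HvX HvJ) as HCZ.
  induction k as [|k IH].
  - set (S0 := Rabs (Rmin (Rinit M + INR (T M) * xmax M) (Rcap M)) + Rabs (Rcap M)).
    set (Pr := Rabs (pref M)).
    assert (HPr : 0 <= Pr) by apply Rabs_pos.
    exists (Kr (lam (T M)) (alp (T M)) * ((Lg * e * S0 * Pr) * CZ M)).
    split.
    { pose proof (Kr_pos (lam (T M)) (alp (T M))). apply Rmult_le_pos; auto.
      apply Rmult_le_pos; auto. unfold S0. pose proof (Rabs_pos (Rmin (Rinit M + INR (T M) * xmax M) (Rcap M))).
      pose proof (Rabs_pos (Rcap M)). repeat apply Rmult_le_pos; lra. }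
    intros r Hr p q. cbn [Vn]. fold e.
    set (s := shortage M r).
    assert (Hs : Rabs s <= S0).
    { unfold s, shortage, S0. eapply Rle_trans; [apply Rabs_triang|].
      rewrite Rabs_Ropp, (Rabs_right r) by lra. pose proof (Rle_abs (Rcap M)). lra. }
    set (c := adet M (T M) - g M (INR (T M) + 1)).
    set (dd := Lg * e * Rabs s * Pr * Rabs (p - q)).
    assert (HLh : forall pp, Lip (fun z => (1 + gh M * s + gY M (pp * e + c + z)) * s * pref M) (Lg * Rabs s * Pr)).
    { intros pp z1 z2. cbv beta. set (A := 1 + gh M * s).
        replace ((A + gY M (pp * e + c + z1)) * s * pref M - (A + gY M (pp * e + c + z2)) * s * pref M)
          with ((gY M (pp * e + c + z1) - gY M (pp * e + c + z2)) * s * pref M) by ring.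
        rewrite !Rabs_mult. fold Pr. pose proof (Rabs_pos s).
        specialize (HLg (pp * e + c + z1) (pp * e + c + z2)).
        replace (pp * e + c + z1 - (pp * e + c + z2)) with (z1 - z2) in HLg by ring.
        assert (0 <= Rabs s * Pr) by (apply Rmult_le_pos; auto).
        pose proof (Rabs_pos (gY M (pp * e + c + z1) - gY M (pp * e + c + z2))).
        pose proof (Rabs_pos (z1 - z2)). nra. }
    eapply Rle_trans.
    { apply (rho_diff M HvX HvJ _ _ _ _ (Lg * Rabs s * Pr) (Lg * Rabs s * Pr) dd).
      - pose proof (Rabs_pos s). repeat apply Rmult_le_pos; lra.
      - pose proof (Rabs_pos s). repeat apply Rmult_le_pos; lra.
      - apply HLh.
      - apply HLh.
      - unfold dd. pose proof (Rabs_pos s). pose proof (Rabs_pos (p - q)). repeat apply Rmult_le_pos; lra.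
      - intros z. cbv beta. set (A := 1 + gh M * s).
        replace ((A + gY M (p * e + c + z)) * s * pref M - (A + gY M (q * e + c + z)) * s * pref M)
          with ((gY M (p * e + c + z) - gY M (q * e + c + z)) * s * pref M) by ring.
        rewrite !Rabs_mult. fold Pr. pose proof (Rabs_pos s).
        specialize (HLg (p * e + c + z) (q * e + c + z)).
        replace (p * e + c + z - (q * e + c + z)) with ((p - q) * e) in HLg by ring.
        rewrite Rabs_mult, (Rabs_right e) in HLg by lra.
        assert (0 <= Rabs s * Pr) by (apply Rmult_le_pos; auto).
        pose proof (Rabs_pos (gY M (p * e + c + z) - gY M (q * e + c + z))).
        pose proof (Rabs_pos (p - q)). unfold dd. nra. }
    unfold dd. pose proof (Kr_pos (lam (T M)) (alp (T M))). pose proof (Rabs_pos (p - q)).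
    pose proof (Rabs_pos s).
    assert (Lg * e * Rabs s * Pr <= Lg * e * S0 * Pr).
    { apply Rmult_le_compat_r; auto. apply Rmult_le_compat_l; auto. apply Rmult_le_pos; lra. }
    assert (Lg * e * Rabs s * Pr * Rabs (p - q) * CZ M <= Lg * e * S0 * Pr * Rabs (p - q) * CZ M).
    { apply Rmult_le_compat_r; auto. apply Rmult_le_compat_r; auto. }
    replace (Kr (lam (T M)) (alp (T M)) * (Lg * e * S0 * Pr * CZ M) * Rabs (p - q))
      with (Kr (lam (T M)) (alp (T M)) * (Lg * e * S0 * Pr * Rabs (p - q) * CZ M)) by ring.
    apply Rmult_le_compat_l; auto.
  - destruct IH as [Lk [HLk IH]].
    set (t := (T M - S k)%nat).
    exists (xmax M + Kr (lam t) (alp t) * ((Lk * e) * CZ M)).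
    pose proof (Kr_pos (lam t) (alp t)).
    split.
    { apply Rplus_le_le_0_compat; [lra|]. repeat apply Rmult_le_pos; lra. }
    intros r Hr p q. cbn [Vn]. fold t.
    set (F := fun p x => x * p - cf M + rho M (lam t) (alp t)
                 (fun z => Vn M lam alp k (r + x) (p * exp (- kY M) + adet M t + z))).
    assert (HF : forall x, 0 <= x <= Rmin (Rcap M - r) (xmax M) ->
              Rabs (F p x - F q x) <= (xmax M + Kr (lam t) (alp t) * ((Lk * e) * CZ M)) * Rabs (p - q)).
    { intros x Hx. unfold F. fold e.
      assert (Hxr : 0 <= r + x <= Rcap M).
      { pose proof (Rmin_l (Rcap M - r) (xmax M)). lra. }
      assert (Hxm2 : x <= xmax M) by (pose proof (Rmin_r (Rcap M - r) (xmax M)); lra).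
      replace (x * p - cf M + rho M (lam t) (alp t) (fun z => Vn M lam alp k (r + x) (p * e + adet M t + z)) -
               (x * q - cf M + rho M (lam t) (alp t) (fun z => Vn M lam alp k (r + x) (q * e + adet M t + z))))
        with (x * (p - q) + (rho M (lam t) (alp t) (fun z => Vn M lam alp k (r + x) (p * e + adet M t + z)) -
               rho M (lam t) (alp t) (fun z => Vn M lam alp k (r + x) (q * e + adet M t + z)))) by ring.
      eapply Rle_trans; [apply Rabs_triang|].
      assert (A1 : Rabs (x * (p - q)) <= xmax M * Rabs (p - q)).
      { rewrite Rabs_mult, Rabs_right by lra. apply Rmult_le_compat_r; [apply Rabs_pos|lra]. }
      assert (A2 : Rabs (rho M (lam t) (alp t) (fun z => Vn M lam alp k (r + x) (p * e + adet M t + z)) -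
               rho M (lam t) (alp t) (fun z => Vn M lam alp k (r + x) (q * e + adet M t + z)))
               <= Kr (lam t) (alp t) * ((Lk * e * Rabs (p - q)) * CZ M)).
      { apply (rho_diff M HvX HvJ _ _ _ _ Lk Lk); auto.
        - intros z1 z2. specialize (IH (r + x) Hxr (p * e + adet M t + z1) (p * e + adet M t + z2)).
          replace (p * e + adet M t + z1 - (p * e + adet M t + z2)) with (z1 - z2) in IH by ring. auto.
        - intros z1 z2. specialize (IH (r + x) Hxr (q * e + adet M t + z1) (q * e + adet M t + z2)).
          replace (q * e + adet M t + z1 - (q * e + adet M t + z2)) with (z1 - z2) in IH by ring. auto.
        - pose proof (Rabs_pos (p - q)). repeat apply Rmult_le_pos; lra.
        - intros z. specialize (IH (r + x) Hxr (p * e + adet M t + z) (q * e + adet M t + z)).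
          replace (p * e + adet M t + z - (q * e + adet M t + z)) with ((p - q) * e) in IH by ring.
          rewrite Rabs_mult, (Rabs_right e) in IH by lra. lra. }
      replace ((xmax M + Kr (lam t) (alp t) * (Lk * e * CZ M)) * Rabs (p - q))
        with (xmax M * Rabs (p - q) + Kr (lam t) (alp t) * (Lk * e * Rabs (p - q) * CZ M)) by ring.
      lra. }
    assert (HD : 0 <= (xmax M + Kr (lam t) (alp t) * ((Lk * e) * CZ M)) * Rabs (p - q)).
    { apply Rmult_le_pos; [|apply Rabs_pos]. apply Rplus_le_le_0_compat; [lra|]. repeat apply Rmult_le_pos; lra. }
    assert (H0in : 0 <= 0 <= Rmin (Rcap M - r) (xmax M)).
    { split; [lra|]. apply Rmin_glb; lra. }
    apply Rinf_diff; auto.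
    + eexists; exists 0; split; [exact H0in|reflexivity].
    + eexists; exists 0; split; [exact H0in|reflexivity].
    + intros w1 [x [Hx ->]]. exists (F q x). split; [exists x; split; auto|].
      specialize (HF x Hx). apply Rabs_le_2 in HF.
      assert (Hq : F q x <= F p x + (xmax M + Kr (lam t) (alp t) * (Lk * e * CZ M)) * Rabs (p - q)) by lra. exact Hq.
    + intros w2 [x [Hx ->]]. exists (F p x). split; [exists x; split; auto|].
      specialize (HF x Hx). apply Rabs_le_2 in HF.
      assert (Hq : F p x <= F q x + (xmax M + Kr (lam t) (alp t) * (Lk * e * CZ M)) * Rabs (p - q)) by lra. exact Hq.
Qed.

Theorem lemma1 (M : model)
  (HT : (1 <= T M)%nat)
  (HRmax : 0 < Rcap M) (Hxmax : 0 < xmax M)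
  (HR0 : 0 <= Rinit M <= Rcap M)
  (Hpref : 0 < pref M) (Hgh : 0 <= gh M)
  (HkY : 0 < kY M) (HsY : 0 < sY M)
  (HlJ : 0 < lJ M < 1) (HsJ : 0 < sJ M)
  (* Assumption 1 *)
  (HgY_pos : forall y, 0 < gY M y)
  (HgY_incr : forall y1 y2, y1 < y2 -> gY M y1 < gY M y2)
  (HgY_lip : exists L, L <= / pref M * exp (2 * kY M) /\
                 forall y1 y2, Rabs (gY M y1 - gY M y2) <= L * Rabs (y1 - y2))
  (* risk-aversion vector beta = (lam 0, alp 0, ..., lam T, alp T) *)
  (lam alp : nat -> R)
  (Hlam : forall s, (s <= T M)%nat -> 0 <= lam s <= 1)
  (Halp : forall s, (s <= T M)%nat -> 0 < alp s < 1)
  (t : nat) (Ht : (t <= T M)%nat)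
  (r : R) (Hr : 0 <= r <= Rcap M) :
  exists L : R, forall p q : R,
    Rabs (V M lam alp t r p - V M lam alp t r q) <= L * Rabs (p - q).
Proof.
  destruct HgY_lip as [Lg [_ HLg]].
  destruct (Vn_lip M lam alp (var_pos M HkY HsY) ltac:(apply pow_lt; lra) Hxmax
              (ex_intro _ Lg HLg) (T M - t)) as [L [_ HL]].
  exists L. intros p q. unfold V. apply HL; auto.
Qed.
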